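(* Let $k\in\{0,1,-1\}$, $c\neq0$, $m>0$ with $m\neq1$, $a_1\neq0$, $a_3$ real, $\hat a=(a_1,0,a_3)^T$, and consider the complex system $$\frac{d\hat K}{dt}=\hat K\times\omega(\hat K)+\hat P\times\hat a,\qquad \frac{d\hat P}{dt}=\hat P\times\omega(\hat K)+k\,(\hat K\times\hat a),\qquad \omega(\hat K)=\Big(\frac{m}{c}K_1,\frac{m}{c}K_2,\frac1cK_3\Big)^T.$$ Consider Laurent series solutions $\hat K(t)=t^{-1}\sum_{n\ge0}K_nt^n$, $\hat P(t)=t^{-2}\sum_{n\ge0}P_nt^n$ whose leading coefficients $K_0=(p_0,q_0,r_0)^T$, $P_0=(f_0,g_0,h_0)^T$ have $r_0=0$, i.e. $p_0=0$, $q_0=\frac{2\varepsilon ic}{m}$, $r_0=0$, $f_0=i\varepsilon h_0$, $g_0=0$, $h_0=\frac{2c}{m(a_3+\varepsilon ia_1)}$ with $\varepsilon=\pm1$. Then all such solutions (i.e. all solutions $(K_n,P_n)_{n\ge1}$ of the recursive relations obtained by equating coefficients of equal powers of $t$) are parametrized by at most four arbitrary complex constants; hence they do not provide a general (six-parameter) meromorphic solution of the system.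
   Context: $\times$ is the complex bilinear vector product on $\mathbb{C}^3$; time $t$ is complex. A general meromorphic solution means a family of such Laurent series solutions depending on six arbitrary complex constants (the dimension of the phase space), as is needed for meromorphic solutions on an open set of initial conditions in $\mathbb{C}^6$. *)

(* Defs.v *)
From HB Require Import structures.
From mathcomp Require Import all_boot all_order all_algebra.
From mathcomp Require Import complex.
Set Implicit Arguments. Unset Strict Implicit. Unset Printing Implicit Defensive.
Import Order.TTheory GRing.Theory Num.Theory.
Local Open Scope ring_scope.

Definition vec3 (C : Type) := (C * C * C)%type.

Section Vec.
Variable C : fieldType.

Definition v1 (u : vec3 C) : C := u.1.1.
Definition v2 (u : vec3 C) : C := u.1.2.
Definition v3 (u : vec3 C) : C := u.2.
Definition mkv (x y z : C) : vec3 C := (x, y, z).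

Definition vadd (u v : vec3 C) : vec3 C := mkv (v1 u + v1 v) (v2 u + v2 v) (v3 u + v3 v).
Definition vscale (s : C) (u : vec3 C) : vec3 C := mkv (s * v1 u) (s * v2 u) (s * v3 u).
Definition vzero : vec3 C := mkv 0 0 0.

Definition cross (u v : vec3 C) : vec3 C :=
  mkv (v2 u * v3 v - v3 u * v2 v)
      (v3 u * v1 v - v1 u * v3 v)
      (v1 u * v2 v - v2 u * v1 v).

Definition vsum (n : nat) (F : nat -> vec3 C) : vec3 C :=
  foldr vadd vzero [seq F i | i <- iota 0 n].

Definition omega (m c : C) (u : vec3 C) : vec3 C :=
  mkv (m / c * v1 u) (m / c * v2 u) (v3 u / c).

(* The recursive relations obtained by substituting
     K(t) = t^-1 \sum_{n>=0} Kc n t^n,   P(t) = t^-2 \sum_{n>=0} Pc n t^n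
   into  dK/dt = K x omega(K) + P x a,  dP/dt = P x omega(K) + k (K x a)
   and equating coefficients of t^(n-2) (first equation) and t^(n-3)
   (second equation), for every n >= 0. *)
Definition laurent_recursion (k m c : C) (a : vec3 C)
    (Kc Pc : nat -> vec3 C) : Prop :=
  forall n : nat,
    vscale (n%:R - 1) (Kc n) =
      vadd (vsum n.+1 (fun i => cross (Kc i) (omega m c (Kc (n - i)%N))))
           (cross (Pc n) a)
    /\
    vscale (n%:R - 2) (Pc n) =
      vadd (vsum n.+1 (fun i => cross (Pc i) (omega m c (Kc (n - i)%N))))
           (if (2 <= n)%N then vscale k (cross (Kc (n - 2)%N) a) else vzero).

Definition coef6 (Kc Pc : nat -> vec3 C) (n : nat) (j : 'I_6) : C :=
  match val j with
  | 0 => v1 (Kc n) | 1 => v2 (Kc n) | 2 => v3 (Kc n)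
  | 3 => v1 (Pc n) | 4 => v2 (Pc n) | _ => v3 (Pc n)
  end.
End Vec.

(* Main.v *)
Require Import Defs.
From HB Require Import structures.
From mathcomp Require Import all_boot all_order all_algebra.
From mathcomp Require Import complex.
Import Order.TTheory GRing.Theory Num.Theory.
Local Open Scope ring_scope.
From mathcomp Require Import ring zify.
From Stdlib Require Import Classical.

Section Alg.
Variable C : numFieldType.

Lemma sub0E (x y : C) : x = y -> x - y = 0.
Proof. by move=> ->; rewrite subrr. Qed.
Arguments sub0E {x y}.

Lemma lincomb (G P1 P2 P3 P4 k1 k2 k3 k4 : C) :
  P1 = 0 -> P2 = 0 -> P3 = 0 -> P4 = 0 -> G = k1*P1+k2*P2+k3*P3+k4*P4 -> G = 0.
Proof. by move=> -> -> -> -> ->; rewrite !mulr0 !addr0. Qed.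
Arguments lincomb {G P1 P2 P3 P4 k1 k2 k3 k4}.

Lemma natr_subn0 (n k : nat) : n != k -> (n%:R - k%:R : C) != 0.
Proof. by rewrite subr_eq0 eqr_nat. Qed.
Arguments natr_subn0 {n k}.

Lemma mul0_l (x y : C) : x != 0 -> x * y = 0 -> y = 0.
Proof. by move=> hx /eqP; rewrite mulf_eq0 (negbTE hx) => /eqP. Qed.
Arguments mul0_l {x y}.


Lemma algB (s a1 a3 : C) (n : nat) (d2 d4 d6 : C) :
  s * s = -1 -> a3 + s * a1 != 0 -> a1 + s * a3 != 0 -> (0 < n)%N ->
  (n%:R - 1) * d2 = a1 * d6 - a3 * d4 ->
  (n%:R - 2) * d4 = - (2 / (a3 + s * a1)) * d2 - 2 * s * d6 ->
  (n%:R - 2) * d6 = s * (2 / (a3 + s * a1)) * d2 + 2 * s * d4 ->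
  ((n != 2) && (n != 4) \/ d2 = 0) -> d2 = 0 /\ d4 = 0 /\ d6 = 0.
Proof.
move=> Hs hw hw' hn.
set N : C := n%:R; set u := 2 / (a3 + s * a1).
move=> /sub0E P1 /sub0E P2 /sub0E P3 Hc.
have Ps : s * s + 1 = 0 by rewrite Hs addNr.
have G4 : N * (N - 4) * d4 + u * (N - 4) * d2 = 0.
  apply: (lincomb P2 P3 Ps P1 (k1 := N - 2) (k2 := - (2 * s)) (k3 := - (2 * u * d2 + 4 * d4)) (k4 := 0)).
  ring.
have G6 : N * (N - 4) * d6 - s * u * (N - 4) * d2 = 0.
  apply: (lincomb P2 P3 Ps P1 (k1 := 2 * s) (k2 := N - 2) (k3 := - (4 * d6)) (k4 := 0)).
  ring.
have G2 : (N - 4) * (N - 2) * (N + 1) * d2 = 0.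
  apply: (lincomb P1 G6 G4 Ps (k1 := N * (N - 4)) (k2 := a1) (k3 := - a3) (k4 := 0)).
  rewrite /u; field. done.
have hd2 : d2 = 0.
  case: Hc => // /andP [h2 h4].
  apply: (mul0_l _ G2).
  rewrite !mulf_neq0 //; try exact: natr_subn0.
  by rewrite (_ : N + 1 = n.+1%:R) ?pnatr_eq0 // -addn1 natrD.
move: G4 G6 P1 P2; rewrite hd2 !(mulr0, subr0, addr0) => G4 G6 P1 P2.
case: (eqVneq n 4) => [hn4|h4].
  rewrite /N hn4 in P1 P2.
  have G : (a1 + s * a3) * d6 = 0.
    apply: (lincomb P1 P2 Ps Ps (k1 := -1) (k2 := a3 / 2) (k3 := 0) (k4 := 0)).
    by field.
  have hd6 := mul0_l hw' G.
  split => //; split => //.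
  have G' : 2 * d4 = 0.
    apply: (lincomb P2 Ps Ps Ps (k1 := 1) (k2 := 0) (k3 := 0) (k4 := 0)).
    rewrite hd6; ring.
  by apply: (mul0_l _ G'); rewrite pnatr_eq0.
have hN : N * (N - 4) != 0.
  by rewrite mulf_neq0 ?natr_subn0 // pnatr_eq0 -lt0n.
by split => //; split; [apply: (mul0_l hN G4) | apply: (mul0_l hN G6)].
Qed.


Definition DA (s a1 a3 m N : C) :=
  (N - 3) * (N * N - N - 2 * s * a1 * (1 - m) / (m * (a3 + s * a1))).

Lemma algA (s a1 a3 m : C) (n : nat) (d1 d3 d5 : C) :
  s * s = -1 -> m != 0 -> m != 1 -> a1 != 0 -> a3 + s * a1 != 0 -> (0 < n)%N ->
  (n%:R - 1) * d1 = (2 * s * (1 - m) / m) * d3 + a3 * d5 ->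
  (n%:R - 1) * d3 = - a1 * d5 ->
  (n%:R - 2) * d5 = (2 / (a3 + s * a1)) * d1 - (2 * s / (m * (a3 + s * a1))) * d3 ->
  (n = 1%N \/ DA s a1 a3 m n%:R != 0 \/ d5 = 0) -> d1 = 0 /\ d3 = 0 /\ d5 = 0.
Proof.
move=> Hs hm hm1 ha1 hw hn.
set N : C := n%:R.
move=> /sub0E P1 /sub0E P2 /sub0E P3 Hc.
have Ps : s * s + 1 = 0 by rewrite Hs addNr.
have hs : s != 0 by apply/eqP => s0; move: Ps; rewrite s0 mul0r add0r => /eqP; rewrite oner_eq0.
have G : DA s a1 a3 m N * d5 = 0.
  apply: (lincomb P3 P1 P2 Ps (k1 := (N - 1) ^+ 2) (k2 := 2 / (a3 + s * a1) * (N - 1))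
     (k3 := - ((2 * s / (m * (a3 + s * a1))) * (N - 1) - 2 / (a3 + s * a1) * (2 * s * (1 - m) / m)))
     (k4 := 0)).
  rewrite /DA; field. by rewrite hw hm.
have hd5 : d5 = 0.
  case: Hc => [hn1|[hD|//]]; last exact: mul0_l hD G.
  have G' : a1 * d5 = 0.
    apply: (lincomb P2 Ps Ps Ps (k1 := 1) (k2 := 0) (k3 := 0) (k4 := 0)).
    rewrite /N hn1; ring.
  exact: mul0_l ha1 G'.
have hu : 2 / (a3 + s * a1) != 0 by rewrite mulf_neq0 ?invr_eq0 ?pnatr_eq0.
have hd3 : d3 = 0.
  case: (eqVneq n 1) => [hn1|hn1].
    have hal : 2 * s * (1 - m) / m != 0.
      by rewrite !mulf_neq0 ?invr_eq0 ?pnatr_eq0 // subr_eq0 eq_sym.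
    apply: (mul0_l hal).
    apply: (lincomb P1 Ps Ps Ps (k1 := -1) (k2 := 0) (k3 := 0) (k4 := 0)).
    rewrite /N hn1 hd5; ring.
  have hN1 : N - 1 != 0 by rewrite subr_eq0 pnatr_eq1.
  apply: (mul0_l hN1).
  apply: (lincomb P2 Ps Ps Ps (k1 := 1) (k2 := 0) (k3 := 0) (k4 := 0)).
  rewrite hd5; ring.
split; last by [].
apply: (mul0_l hu).
apply: (lincomb P3 Ps Ps Ps (k1 := -1) (k2 := 0) (k3 := 0) (k4 := 0)).
rewrite hd5 hd3; ring.
Qed.


Lemma DA_uniq (s a1 a3 m : C) (n n' : nat) :
  m != 0 -> a3 + s * a1 != 0 -> n != 3 -> n' != 3 -> (1 <= n)%N -> (1 <= n')%N ->
  DA s a1 a3 m n%:R = 0 -> DA s a1 a3 m n'%:R = 0 -> n = n'.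
Proof.
move=> hm hw h3 h3' hn hn'.
rewrite /DA => /(mul0_l (natr_subn0 h3)) E /(mul0_l (natr_subn0 h3')) E'.
have : (n%:R - n'%:R) * (n%:R + n'%:R - 1) = 0 :> C.
  by apply: (lincomb E E' E E (k1 := 1) (k2 := -1) (k3 := 0) (k4 := 0)); ring.
move/eqP; rewrite mulf_eq0 => /orP [|]; first by rewrite subr_eq0 eqr_nat => /eqP.
rewrite -natrD subr_eq0 pnatr_eq1 => /eqP h; exfalso; clear E E'; move: h; case: n hn h3 => //; case: n' hn' h3' => // n' _ _ n _ _; by rewrite addSn addnS.
Qed.


Lemma vsum_pr (pr : vec3 C -> C) (hpr : forall u v, pr (vadd u v) = pr u + pr v)
  (h0 : pr (vzero C) = 0) n F : pr (vsum n F) = \sum_(i < n) pr (F i).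
Proof.
rewrite /vsum -(big_mkord xpredT (fun i => pr (F i))) /index_iota subn0.
elim: (iota 0 n) => [|x s IH] /=; first by rewrite big_nil.
by rewrite big_cons hpr IH.
Qed.

Lemma sum_split (G G' : nat -> C) n' :
  (forall i, (0 < i)%N -> (i < n'.+1)%N -> G i = G' i) ->
  \sum_(i < n'.+2) G i - \sum_(i < n'.+2) G' i = (G 0%N - G' 0%N) + (G n'.+1 - G' n'.+1).
Proof.
move=> H.
rewrite (big_ord_recr n'.+1) [X in _ - X](big_ord_recr n'.+1) /=.
rewrite (big_ord_recl n' (fun i => G i)) (big_ord_recl n' (fun i => G' i)) /=.
rewrite (eq_bigr (fun i : 'I_n' => G' (bump 0 i))); last first.
  by move=> i _; apply: H; rewrite /bump leq0n add1n // ltnS ltn_ord.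
ring.
Qed.


Lemma raw_eq (pr : vec3 C -> C) (hpr : forall u v, pr (vadd u v) = pr u + pr v)
  (h0 : pr (vzero C) = 0) (hsc : forall t u, pr (vscale t u) = t * pr u)
  (N : C) (X X' B B' : vec3 C) (F F' : nat -> vec3 C) n' :
  (forall i, (0 < i)%N -> (i < n'.+1)%N -> F i = F' i) ->
  vscale N X = vadd (vsum n'.+2 F) B -> vscale N X' = vadd (vsum n'.+2 F') B' ->
  N * pr X - N * pr X' =
    (pr (F 0%N) - pr (F' 0%N)) + (pr (F n'.+1) - pr (F' n'.+1)) + (pr B - pr B').
Proof.
move=> H /(congr1 pr) E /(congr1 pr) E'.
rewrite !hsc in E E'; rewrite E E' (hpr (vsum _ F) B) (hpr (vsum _ F') B') !(vsum_pr pr hpr h0).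
have hs := @sum_split (fun i => pr (F i)) (fun i => pr (F' i)) n'
  (fun i a b => congr1 pr (H i a b)).
move: hs => /= hs.
have P := sub0E hs.
apply: subr0_eq.
by apply: (lincomb P P P P (k1 := 1) (k2 := 0) (k3 := 0) (k4 := 0)); ring.
Qed.


Lemma vec_eq (u u' : vec3 C) :
  v1 u - v1 u' = 0 -> v2 u - v2 u' = 0 -> v3 u - v3 u' = 0 -> u = u'.
Proof.
case: u => [[x y] z]; case: u' => [[x' y'] z']; rewrite /v1 /v2 /v3 /=.
by move=> /subr0_eq -> /subr0_eq -> /subr0_eq ->.
Qed.

Lemma step (k cc mm A1 A3 s : C) (Kc Pc Kc' Pc' : nat -> vec3 C) (n' : nat) :
  s * s = -1 -> cc != 0 -> mm != 0 -> mm != 1 -> A1 != 0 -> A3 + s * A1 != 0 ->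
  A1 + s * A3 != 0 ->
  Kc 0%N = mkv 0 (2 * s * cc / mm) 0 -> Kc' 0%N = mkv 0 (2 * s * cc / mm) 0 ->
  Pc 0%N = mkv (s * (2 * cc / (mm * (A3 + s * A1)))) 0 (2 * cc / (mm * (A3 + s * A1))) ->
  Pc' 0%N = mkv (s * (2 * cc / (mm * (A3 + s * A1)))) 0 (2 * cc / (mm * (A3 + s * A1))) ->
  laurent_recursion k mm cc (mkv A1 0 A3) Kc Pc ->
  laurent_recursion k mm cc (mkv A1 0 A3) Kc' Pc' ->
  (forall i, (i < n'.+1)%N -> Kc i = Kc' i /\ Pc i = Pc' i) ->
  ((n'.+1 != 2) && (n'.+1 != 4) \/ v2 (Kc n'.+1) = v2 (Kc' n'.+1)) ->
  (n'.+1 = 1%N \/ DA s A1 A3 mm n'.+1%:R != 0 \/ v2 (Pc n'.+1) = v2 (Pc' n'.+1)) ->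
  Kc n'.+1 = Kc' n'.+1 /\ Pc n'.+1 = Pc' n'.+1.
Proof.
move=> Hs hc hm hm1 ha1 hw hw' eK eK' eP eP' HR HR' IH CB CA.
have Ps : s * s + 1 = 0 by rewrite Hs addNr.
have [EK EP] := HR n'.+1; have [EK' EP'] := HR' n'.+1.
have HF : forall i, (0 < i)%N -> (i < n'.+1)%N ->
    cross (Kc i) (omega mm cc (Kc (n'.+1 - i)%N)) = cross (Kc' i) (omega mm cc (Kc' (n'.+1 - i)%N)).
  move=> i h1 h2; rewrite (proj1 (IH i h2)) (proj1 (IH (n'.+1 - i)%N _)) //; lia.
have HG : forall i, (0 < i)%N -> (i < n'.+1)%N ->
    cross (Pc i) (omega mm cc (Kc (n'.+1 - i)%N)) = cross (Pc' i) (omega mm cc (Kc' (n'.+1 - i)%N)).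
  move=> i h1 h2; rewrite (proj2 (IH i h2)) (proj1 (IH (n'.+1 - i)%N _)) //; lia.
have HB : (if (2 <= n'.+1)%N then vscale k (cross (Kc (n'.+1 - 2)%N) (mkv A1 0 A3)) else vzero C)
    = (if (2 <= n'.+1)%N then vscale k (cross (Kc' (n'.+1 - 2)%N) (mkv A1 0 A3)) else vzero C).
  case: ifP => // h2; rewrite (proj1 (IH (n'.+1 - 2)%N _)) //; lia.
have R1 := @raw_eq (@v1 C) (fun _ _ => erefl) erefl (fun _ _ => erefl) _ _ _ _ _ _ _ n' HF EK EK'.
have R2 := @raw_eq (@v2 C) (fun _ _ => erefl) erefl (fun _ _ => erefl) _ _ _ _ _ _ _ n' HF EK EK'.
have R3 := @raw_eq (@v3 C) (fun _ _ => erefl) erefl (fun _ _ => erefl) _ _ _ _ _ _ _ n' HF EK EK'.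
have R4 := @raw_eq (@v1 C) (fun _ _ => erefl) erefl (fun _ _ => erefl) _ _ _ _ _ _ _ n' HG EP EP'.
have R5 := @raw_eq (@v2 C) (fun _ _ => erefl) erefl (fun _ _ => erefl) _ _ _ _ _ _ _ n' HG EP EP'.
have R6 := @raw_eq (@v3 C) (fun _ _ => erefl) erefl (fun _ _ => erefl) _ _ _ _ _ _ _ n' HG EP EP'.
rewrite HB subrr addr0 in R4 R5 R6.
rewrite /= subn0 subnn eK eK' eP eP' in R1 R2 R3 R4 R5 R6.
move: (sub0E R1) (sub0E R2) (sub0E R3) (sub0E R4) (sub0E R5) (sub0E R6) => {R1 R2 R3 R4 R5 R6}.
rewrite /cross /omega /v1 /v2 /v3 /mkv /=.
move=> R1 R2 R3 R4 R5 R6.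
set N : C := n'.+1%:R.
have E1 : (N - 1) * (v1 (Kc n'.+1) - v1 (Kc' n'.+1)) =
   (2 * s * (1 - mm) / mm) * (v3 (Kc n'.+1) - v3 (Kc' n'.+1)) + A3 * (v2 (Pc n'.+1) - v2 (Pc' n'.+1)).
  apply: subr0_eq; apply: (lincomb R1 Ps Ps Ps (k1 := 1) (k2 := 0) (k3 := 0) (k4 := 0)).
  rewrite /v1 /v2 /v3 /mkv /=; field; by repeat (apply/andP; split).
have E3 : (N - 1) * (v3 (Kc n'.+1) - v3 (Kc' n'.+1)) = - A1 * (v2 (Pc n'.+1) - v2 (Pc' n'.+1)).
  apply: subr0_eq; apply: (lincomb R3 Ps Ps Ps (k1 := 1) (k2 := 0) (k3 := 0) (k4 := 0)).
  rewrite /v1 /v2 /v3 /mkv /=; field; by repeat (apply/andP; split).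
have E5 : (N - 2) * (v2 (Pc n'.+1) - v2 (Pc' n'.+1)) =
   (2 / (A3 + s * A1)) * (v1 (Kc n'.+1) - v1 (Kc' n'.+1))
   - (2 * s / (mm * (A3 + s * A1))) * (v3 (Kc n'.+1) - v3 (Kc' n'.+1)).
  apply: subr0_eq; apply: (lincomb R5 Ps Ps Ps (k1 := 1) (k2 := 0) (k3 := 0) (k4 := 0)).
  rewrite /v1 /v2 /v3 /mkv /=; field; by repeat (apply/andP; split).
have E2 : (N - 1) * (v2 (Kc n'.+1) - v2 (Kc' n'.+1)) =
   A1 * (v3 (Pc n'.+1) - v3 (Pc' n'.+1)) - A3 * (v1 (Pc n'.+1) - v1 (Pc' n'.+1)).
  apply: subr0_eq; apply: (lincomb R2 Ps Ps Ps (k1 := 1) (k2 := 0) (k3 := 0) (k4 := 0)).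
  rewrite /v1 /v2 /v3 /mkv /=; field; by repeat (apply/andP; split).
have E4 : (N - 2) * (v1 (Pc n'.+1) - v1 (Pc' n'.+1)) =
   - (2 / (A3 + s * A1)) * (v2 (Kc n'.+1) - v2 (Kc' n'.+1)) - 2 * s * (v3 (Pc n'.+1) - v3 (Pc' n'.+1)).
  apply: subr0_eq; apply: (lincomb R4 Ps Ps Ps (k1 := 1) (k2 := 0) (k3 := 0) (k4 := 0)).
  rewrite /v1 /v2 /v3 /mkv /=; field; by repeat (apply/andP; split).
have E6 : (N - 2) * (v3 (Pc n'.+1) - v3 (Pc' n'.+1)) =
   s * (2 / (A3 + s * A1)) * (v2 (Kc n'.+1) - v2 (Kc' n'.+1)) + 2 * s * (v1 (Pc n'.+1) - v1 (Pc' n'.+1)).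
  apply: subr0_eq; apply: (lincomb R6 Ps Ps Ps (k1 := 1) (k2 := 0) (k3 := 0) (k4 := 0)).
  rewrite /v1 /v2 /v3 /mkv /=; field; by repeat (apply/andP; split).
have CA' : (n'.+1 = 1%N \/ DA s A1 A3 mm n'.+1%:R != 0 \/ v2 (Pc n'.+1) - v2 (Pc' n'.+1) = 0).
  by case: CA => [->|[->|->]]; [left|right; left|right; right; rewrite subrr].
have CB' : ((n'.+1 != 2) && (n'.+1 != 4) \/ v2 (Kc n'.+1) - v2 (Kc' n'.+1) = 0).
  by case: CB => [->|->]; [left|right; rewrite subrr].
have [d1 [d3 d5]] := algA s A1 A3 mm n'.+1 _ _ _ Hs hm hm1 ha1 hw (ltn0Sn n') E1 E3 E5 CA'.
have [d2 [d4 d6]] := algB s A1 A3 n'.+1 _ _ _ Hs hw hw' (ltn0Sn n') E2 E4 E6 CB'.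
by split; apply: vec_eq.
Qed.



Lemma pick_sum (N t : nat) (j0 : 'I_6) (X : nat -> 'I_6 -> C) : (t < N)%N ->
  \sum_(n < N) \sum_(j < 6) ((nat_of_ord n == t) && (j == j0))%:R * X n j = X t j0.
Proof.
move=> ht.
rewrite (bigD1 (Ordinal ht)) //= [X in _ + X]big1 ?addr0; last first.
  move=> i hi; apply: big1 => j _.
  have -> : (nat_of_ord i == t) = false.
    by apply/negbTE; apply: contra hi => /eqP hit; apply/eqP; apply: val_inj.
  by rewrite /= mul0r.
rewrite (bigD1 j0) //= eqxx eqxx /= mul1r big1 ?addr0 //.
by move=> j hj; rewrite (negbTE hj) mul0r.
Qed.

Lemma core (k cc mm A1 A3 s : C) (K0 P0 : vec3 C) :
  s * s = -1 -> cc != 0 -> mm != 0 -> mm != 1 -> A1 != 0 -> A3 + s * A1 != 0 ->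
  A1 + s * A3 != 0 ->
  K0 = mkv 0 (2 * s * cc / mm) 0 ->
  P0 = mkv (s * (2 * cc / (mm * (A3 + s * A1)))) 0 (2 * cc / (mm * (A3 + s * A1))) ->
  exists (N : nat) (w : 'I_4 -> 'I_N -> 'I_6 -> C),
    forall Kc Pc Kc' Pc' : nat -> vec3 C,
      Kc 0%N = K0 -> Pc 0%N = P0 -> Kc' 0%N = K0 -> Pc' 0%N = P0 ->
      laurent_recursion k mm cc (mkv A1 0 A3) Kc Pc ->
      laurent_recursion k mm cc (mkv A1 0 A3) Kc' Pc' ->
      (forall l : 'I_4,
         \sum_(n < N) \sum_(j < 6) w l n j * coef6 Kc Pc n j =
         \sum_(n < N) \sum_(j < 6) w l n j * coef6 Kc' Pc' n j) ->
      forall n : nat, Kc n = Kc' n /\ Pc n = Pc' n.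
Proof.
move=> Hs hc hm hm1 ha1 hw hw' hK0 hP0.
have [n1 Hn1] : exists n1 : nat, forall n : nat, (2 <= n)%N -> n != 3 ->
    DA s A1 A3 mm n%:R = 0 -> n = n1.
  case: (classic (exists n0 : nat, [/\ (2 <= n0)%N, n0 != 3 & DA s A1 A3 mm n0%:R = 0]))
    => [[n0 [h2 h3 hD]]|hne].
    exists n0 => n hn2 hn3 hD'.
    exact: (DA_uniq s A1 A3 mm n n0 hm hw hn3 h3 (ltnW hn2) (ltnW h2) hD' hD).
  exists 0%N => n hn2 hn3 hD; exfalso; apply: hne; by exists n; split.
pose tl (l : 'I_4) : nat := match val l with 0 => 2 | 1 => 4 | 2 => 3 | _ => n1 end.
pose jl (l : 'I_4) : 'I_6 := match val l with 0 | 1 => Ordinal (isT : (1 < 6)%N)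
                                             | _ => Ordinal (isT : (4 < 6)%N) end.
exists (maxn 5 n1.+1), (fun l n j => ((nat_of_ord n == tl l) && (j == jl l))%:R).
move=> Kc Pc Kc' Pc' eK eP eK' eP' HR HR' HW.
have HWl : forall l : 'I_4, coef6 Kc Pc (tl l) (jl l) = coef6 Kc' Pc' (tl l) (jl l).
  move=> l; have ht : (tl l < maxn 5 n1.+1)%N.
    rewrite /tl; case: l => [[|[|[|l]]] hl] /=; lia.
  by have := HW l; rewrite !pick_sum.
have F0 := HWl (Ordinal (isT : (0 < 4)%N)).
have F1 := HWl (Ordinal (isT : (1 < 4)%N)).
have F2 := HWl (Ordinal (isT : (2 < 4)%N)).
have F3 := HWl (Ordinal (isT : (3 < 4)%N)).
rewrite /tl /jl /coef6 /= in F0 F1 F2 F3.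
rewrite hK0 in eK eK'; rewrite hP0 in eP eP'.
have main : forall n i, (i <= n)%N -> Kc i = Kc' i /\ Pc i = Pc' i.
  elim=> [|n IHn] i hi.
    by move: hi; rewrite leqn0 => /eqP ->; rewrite eK eK' eP eP'.
  case: (ltnP i n.+1) => hi'; first by apply: IHn; rewrite -ltnS.
  have -> : i = n.+1 by apply/eqP; rewrite eqn_leq hi hi'.
  apply: (step k cc mm A1 A3 s Kc Pc Kc' Pc' n Hs hc hm hm1 ha1 hw hw' eK eK' eP eP' HR HR').
  - by move=> j hj; apply: IHn; rewrite -ltnS.
  - case: (eqVneq n.+1 2) => [e2|n2]; first by right; rewrite e2.
    case: (eqVneq n.+1 4) => [e4|n4]; first by right; rewrite e4.
    by left; apply/andP; split.
  - case: (eqVneq n.+1 1) => [e1|n1']; first by left.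
    right.
    case: (eqVneq (DA s A1 A3 mm n.+1%:R) 0) => [hD|hD]; last by left.
    right.
    case: (eqVneq n.+1 3) => [e3|n3]; first by rewrite e3.
    have -> : n.+1 = n1.
      apply: Hn1 => //; lia.
    move: F3; rewrite /v2 /=; exact: id.
by move=> n; apply: (main n).
Qed.

End Alg.
Arguments lincomb {C G P1 P2 P3 P4 k1 k2 k3 k4}.
Arguments sub0E {C x y}.

Lemma sq_id (C : comRingType) (s x y : C) : s * s + 1 = 0 ->
  (x + s * y) * (x - s * y) = x ^+ 2 + y ^+ 2.
Proof.
move=> Ps; apply/eqP; rewrite -subr_eq0; apply/eqP.
rewrite (_ : _ - _ = - (y * y) * (s * s + 1)); first by rewrite Ps mulr0.
ring.
Qed.

Theorem theorem2 (R : rcfType) (k : int) (c m a1 a3 : R) (eps : int) :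
  (k = 0 \/ k = 1 \/ k = -1) ->
  c != 0 -> 0 < m -> m != 1 -> a1 != 0 ->
  (eps = 1 \/ eps = -1) ->
  let C := R[i] in
  let a : vec3 C := mkv (a1%:C)%C 0 (a3%:C)%C in
  let h0 : C := (2 * c%:C / (m%:C * (a3%:C + eps%:~R * 'i * a1%:C)))%C in
  let K0 : vec3 C := mkv 0 ((2 * eps%:~R * 'i * c%:C) / m%:C)%C 0 in
  let P0 : vec3 C := mkv ('i * eps%:~R * h0)%C 0 h0 in
  exists (N : nat) (w : 'I_4 -> 'I_N -> 'I_6 -> C),
    forall Kc Pc Kc' Pc' : nat -> vec3 C,
      Kc 0%N = K0 -> Pc 0%N = P0 -> Kc' 0%N = K0 -> Pc' 0%N = P0 ->
      laurent_recursion (k%:~R) (m%:C)%C (c%:C)%C a Kc Pc ->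
      laurent_recursion (k%:~R) (m%:C)%C (c%:C)%C a Kc' Pc' ->
      (forall l : 'I_4,
         \sum_(n < N) \sum_(j < 6) w l n j * coef6 Kc Pc n j =
         \sum_(n < N) \sum_(j < 6) w l n j * coef6 Kc' Pc' n j) ->
      forall n : nat, Kc n = Kc' n /\ Pc n = Pc' n.
Proof.
move=> hk hc hm hm1 ha1 heps C a h0 K0 P0.
subst C.
set s : R[i] := (eps%:~R * 'i)%C.
have He : (eps%:~R : R[i]) * eps%:~R = 1.
  by rewrite -intrM; case: heps => -> .
have Hi : ('i * 'i = -1 :> R[i])%C by rewrite -expr2 sqr_i.
have Hs : s * s = -1.
  apply: subr0_eq; rewrite /s.
  apply: (lincomb (sub0E He) (sub0E Hi) (sub0E He) (sub0E He) (k1 := ('i * 'i)%C) (k2 := 1) (k3 := 0) (k4 := 0)).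
  ring.
have Ps : s * s + 1 = 0 by rewrite Hs addNr.
have hc' : (c%:C != 0 :> R[i])%C by rewrite fmorph_eq0.
have hm' : (m%:C != 0 :> R[i])%C by rewrite fmorph_eq0 gt_eqF.
have hm1' : (m%:C != 1 :> R[i])%C.
  by rewrite -(rmorph1 (real_complex R)) (inj_eq (@complexI R)).
have ha1' : (a1%:C != 0 :> R[i])%C by rewrite fmorph_eq0.
have hsq : forall x y : R, y != 0 -> (x%:C + s * y%:C != 0 :> R[i])%C.
  move=> x y hy; apply/eqP => h.
  have E : ((x%:C + s * y%:C) * (x%:C - s * y%:C) = (x ^+ 2 + y ^+ 2)%:C :> R[i])%C.
    by rewrite rmorphD !rmorphXn /= (sq_id _ _ _ _ Ps).
  move: E; rewrite h mul0r => /esym/eqP; rewrite fmorph_eq0 paddr_eq0 ?sqr_ge0 //.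
  by rewrite sqrf_eq0 sqrf_eq0 (negbTE hy) andbF.
have hw := hsq a3 a1 ha1.
have hw' : ((a1%:C + s * a3%:C) != 0 :> R[i])%C.
  case: (eqVneq a3 0) => [->|h3]; last exact: hsq a1 a3 h3.
  by rewrite rmorph0 mulr0 addr0.
have hK0 : K0 = mkv 0 (2 * s * (c%:C)%C / (m%:C)%C) 0 by rewrite /K0 /s !mulrA.
have hP0 : P0 = mkv (s * (2 * (c%:C)%C / ((m%:C)%C * ((a3%:C)%C + s * (a1%:C)%C)))) 0
                    (2 * (c%:C)%C / ((m%:C)%C * ((a3%:C)%C + s * (a1%:C)%C))).
  by rewrite /P0 /h0 /s; congr (mkv _ _ _); ring.
exact: (core _ (k%:~R) (c%:C)%C (m%:C)%C (a1%:C)%C (a3%:C)%C s K0 P0 Hs hc' hm' hm1' ha1' hw hw' hK0 hP0).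
Qed.
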